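(* Let $A=(a_{ij})$ be an $n\times n$ symmetric matrix with nonnegative entries and zero diagonal, $V=\{1,\dots,n\}$, and let $S\subseteq V$ with $S\neq\emptyset$. Define $$\gamma_S=\max_{\mathbf{x}\in\Delta_{V\setminus S}}\ \min_{i\in S}\ \frac{\mathbf{x}'A\mathbf{x}-(A\mathbf{x})_i}{\mathbf{x}'\mathbf{x}}.$$ Then $\gamma_S\le\lambda_{\max}(A_{V\setminus S})$, where $\lambda_{\max}(A_{V\setminus S})$ is the largest eigenvalue of the principal submatrix of $A$ indexed by the elements of $V\setminus S$.
   Context: $\Delta=\{\mathbf{x}\in\mathbb{R}^n:\sum_i x_i=1,\ x_i\ge 0\}$ is the standard simplex; for $T\subseteq V$, $\Delta_T=\{\mathbf{x}\in\Delta:\sigma(\mathbf{x})\subseteq T\}$, where $\sigma(\mathbf{x})=\{i: x_i>0\}$. A prime denotes transposition. *)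

(* Defs.v *)
From HB Require Import structures.
From mathcomp Require Import all_boot all_order all_algebra.
From mathcomp Require Import reals.
Set Implicit Arguments. Unset Strict Implicit. Unset Printing Implicit Defensive.
Import Order.TTheory GRing.Theory Num.Theory.
Local Open Scope ring_scope.

(* Vectors in R^n are column vectors 'cV[R]_n; V = 'I_n (0-based). *)

Definition in_simplex_on (R : realType) (n : nat) (T : {set 'I_n})
  (x : 'cV[R]_n) : Prop :=
  [/\ \sum_(i < n) x i 0 = 1,
      (forall i, 0 <= x i 0) &
      (forall i, 0 < x i 0 -> i \in T)].

(* minimum of f over a (nonempty) finite set S; 0 on the empty set (unused) *)
Definition min_over (R : realType) (n : nat) (S : {set 'I_n})
  (f : 'I_n -> R) : R :=
  match [pick i in S] with
  | Some i0 => \big[Num.min/f i0]_(i in S) f i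
  | None => 0
  end.

Definition gamma_term (R : realType) (n : nat) (A : 'M[R]_n)
  (x : 'cV[R]_n) (i : 'I_n) : R :=
  (((x^T *m A *m x) 0 0) - (A *m x) i 0) / ((x^T *m x) 0 0).

Definition principal_submx (R : realType) (n : nat) (A : 'M[R]_n)
  (T : {set 'I_n}) : 'M[R]_#|T| :=
  \matrix_(i, j) A (enum_val i) (enum_val j).

Definition is_lambda_max (R : realType) (m : nat) (M : 'M[R]_m) (l : R) : Prop :=
  eigenvalue M l /\ (forall mu, eigenvalue M mu -> mu <= l).

(* Main.v *)
Require Import Defs.
From HB Require Import structures.
From mathcomp Require Import all_boot all_order all_algebra.
From mathcomp Require Import reals.
From mathcomp Require all_classical all_reals all_analysis.
From mathcomp Require Import ring lra.
Import Order.TTheory GRing.Theory Num.Theory.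
Set Implicit Arguments. Unset Strict Implicit. Unset Printing Implicit Defensive.
Local Open Scope ring_scope.

Module Ray.
From mathcomp Require Import all_classical all_reals all_analysis.
Import Order.TTheory GRing.Theory Num.Theory.
Import numFieldTopology.Exports numFieldNormedType.Exports.
Local Open Scope classical_set_scope.
Set Implicit Arguments. Unset Strict Implicit. Unset Printing Implicit Defensive.
Local Open Scope ring_scope.

Section RaySec.
Variable R : realType.

Definition qf m (M : 'M[R]_m) (u w : 'rV[R]_m) : R := (u *m M *m w^T) 0 0.

Lemma sqE m (u : 'rV[R]_m) : (u *m u^T) 0 0 = \sum_j u 0 j ^+ 2.
Proof. by rewrite mxE; apply: eq_bigr => j _; rewrite mxE expr2. Qed.

Lemma sq_ge0 m (u : 'rV[R]_m) : 0 <= (u *m u^T) 0 0.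
Proof. by rewrite sqE sumr_ge0 // => j _; rewrite sqr_ge0. Qed.

Lemma sq_eq0 m (u : 'rV[R]_m) : (u *m u^T) 0 0 = 0 -> u = 0.
Proof.
rewrite sqE => /psumr_eq0P H; apply/rowP => j; rewrite mxE.
by apply/eqP; rewrite -sqrf_eq0 H // => i _; rewrite sqr_ge0.
Qed.

Lemma qf_sym m (M : 'M[R]_m) u w : M^T = M -> qf M w u = qf M u w.
Proof.
move=> sM; rewrite /qf -[in RHS](trmxK (u *m M *m w^T)) [in RHS]mxE.
by rewrite !trmx_mul trmxK sM -mulmxA.
Qed.

Lemma qf_exp m (M : 'M[R]_m) c v t : M^T = M ->
  qf M (c + t *: v) (c + t *: v) = qf M c c + 2 * t * qf M c v + t ^+ 2 * qf M v v.
Proof.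
move=> sM; rewrite /qf linearD linearZ /= !mulmxDl !mulmxDr.
rewrite -!scalemxAl -!scalemxAr.
have := qf_sym c v sM; rewrite /qf.
set a3 := (v *m M *m c^T); set a2 := (c *m M *m v^T) => E.
clearbody a2 a3.
rewrite !mxE E.
by rewrite expr2; ring.
Qed.

Lemma psd_null m (B : 'M[R]_m) c : B^T = B -> (forall u, 0 <= qf B u u) ->
  qf B c c = 0 -> c *m B = 0.
Proof.
move=> sB psd c0; set v := c *m B.
have bE : qf B c v = (v *m v^T) 0 0 by [] .
have b0 : qf B c v = 0.
  set b := qf B c v; set P := qf B v v.
  have P0 : 0 <= P by apply: psd.
  have := psd (c + (- b / (P + 1)) *: v); rewrite qf_exp // c0 -/b -/P add0r.
  have P1 : 0 < P + 1 by rewrite ltr_wpDl.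
  move=> H.
  have : 0 <= b ^+ 2 * (- P - 2) / (P + 1) ^+ 2.
    suff -> : b ^+ 2 * (- P - 2) / (P + 1) ^+ 2 =
      2 * (- b / (P + 1)) * b + (- b / (P + 1)) ^+ 2 * P by [].
    by field; rewrite gt_eqF.
  rewrite pmulr_lge0 ?invr_gt0 ?exprn_gt0 // => H2.
  have : b ^+ 2 <= 0.
    have : 0 < P + 2 by rewrite ltr_wpDl.
    move=> P2; nra.
  by move=> Hb; apply/eqP; rewrite -sqrf_eq0 eq_le Hb sqr_ge0.
by apply: sq_eq0; rewrite -bE.
Qed.

Lemma cont_sum m (I : finType) (F : I -> 'rV[R]_m -> R) :
  (forall i, continuous (F i)) -> continuous (fun v => \sum_i F i v).
Proof.
move=> Fc.
suff H : forall r : seq I, continuous (fun v => \sum_(i <- r) F i v) by exact: H.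
elim => [|i r IH].
  under eq_fun do rewrite big_nil; exact: cst_continuous.
under eq_fun do rewrite big_cons.
move=> x.
apply: continuousD; [exact: Fc|exact: IH].
Qed.

Lemma qf_cont m (M : 'M[R]_m) : continuous (fun v => qf M v v).
Proof.
have E : (fun v => qf M v v) = fun v => \sum_j (\sum_k v 0 k * M k j) * v 0 j.
  apply: funext => v; rewrite /qf mxE; apply: eq_bigr => j _.
  by rewrite !mxE.
rewrite E; apply: cont_sum => j x.
apply: (@continuousM R _ (fun v : 'rV[R]_m => \sum_k v 0 k * M k j) (fun v => v 0 j)).
  apply: cont_sum => k y.
  apply: (@continuousM R _ (fun v : 'rV[R]_m => v 0 k) (fun _ => M k j)).
    exact: coord_continuous.
  exact: cst_continuous.
exact: coord_continuous.
Qed.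

Lemma qfZ m (M : 'M[R]_m) a u : qf M (a *: u) (a *: u) = a ^+ 2 * qf M u u.
Proof.
by rewrite /qf linearZ /= -scalemxAl -scalemxAr -scalemxAl scalerA mxE expr2.
Qed.

Lemma qfB m (M : 'M[R]_m) l u : qf (l%:M - M) u u = l * (u *m u^T) 0 0 - qf M u u.
Proof.
by rewrite /qf mulmxBr mul_mx_scalar mulmxBl -scalemxAl !mxE.
Qed.

Lemma qf0 m (M : 'M[R]_m) : qf M 0 0 = 0.
Proof. by rewrite /qf mul0mx mul0mx mxE. Qed.

Lemma rayleigh m (M : 'M[R]_m) : (0 < m)%N -> M^T = M ->
  exists l, is_lambda_max M l /\ forall v, qf M v v <= l * (v *m v^T) 0 0.
Proof.
move=> m0 sM.
pose Sph := [set v : 'rV[R]_m | (v *m v^T) 0 0 = 1].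
have n2c : continuous (fun v : 'rV[R]_m => (v *m v^T) 0 0).
  have -> : (fun v : 'rV[R]_m => (v *m v^T) 0 0) = fun v => qf 1%:M v v.
    by apply: funext => v; rewrite /qf mulmx1.
  exact: qf_cont.
have Sne : Sph !=set0.
  exists (delta_mx 0 (Ordinal m0)); rewrite /Sph /= sqE.
  rewrite (bigD1 (Ordinal m0)) //= big1 ?mxE ?eqxx ?addr0 ?expr1n //.
  by move=> j /negbTE jn; rewrite mxE jn andbF /= expr0n.
have Scl : closed Sph.
  have -> : Sph = (fun v : 'rV[R]_m => (v *m v^T) 0 0) @^-1` [set x | x = 1] by [].
  apply: preimage_closed; last exact: closed_eq.
  by move=> x _; exact: n2c.
have Sb : bounded_set Sph.
  exists 1; split => // M0 M0gt v Sv.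
  apply: le_trans (ltW M0gt).
  rewrite /Num.norm /= mx_normrE.
  apply: (big_ind (fun z => z <= 1)) => //[x y|[a b] _]; first by rewrite ge_max => -> ->.
  rewrite (ord1 a) /=.
  have : v 0 b ^+ 2 <= 1.
    move: Sv; rewrite /Sph /= sqE (bigD1 b) //= => <-.
    by rewrite lerDl sumr_ge0 // => j _; rewrite sqr_ge0.
  by move=> H; rewrite ler_norml; apply/andP; split; nra.
have Sc : compact Sph by exact: bounded_closed_compact.
have [c cS cmax] := compact_EVT_max Sne Sc (continuous_subspaceT (@qf_cont _ M)).
have c1 : (c *m c^T) 0 0 = 1 by move: cS; rewrite inE.
set l := qf M c c.
have bound : forall v, qf M v v <= l * (v *m v^T) 0 0.
  move=> v; have [v0|vn0] := eqVneq ((v *m v^T) 0 0) 0.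
    by rewrite (sq_eq0 v0) qf0 mul0mx mxE mulr0.
  have vp : 0 < (v *m v^T) 0 0 by rewrite lt_def vn0 sq_ge0.
  set s := Num.sqrt ((v *m v^T) 0 0).
  have sp : 0 < s by rewrite sqrtr_gt0.
  have ss : s ^+ 2 = (v *m v^T) 0 0 by rewrite sqr_sqrtr // ltW.
  have wS : (s^-1 *: v) \in Sph.
    rewrite inE /Sph /=.
    have := qfZ 1%:M (s^-1) v; rewrite /qf !mulmx1 => ->.
    by rewrite exprVn ss mulVf // gt_eqF.
  have := cmax _ wS; rewrite qfZ -/l exprVn ss => H.
  rewrite mulrC -ler_pdivrMl //; by [].
have Bsym : (l%:M - M)^T = l%:M - M by rewrite linearB /= tr_scalar_mx sM.
have Bpsd : forall u, 0 <= qf (l%:M - M) u u by move=> u; rewrite qfB subr_ge0; exact: bound.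
have Bc : qf (l%:M - M) c c = 0 by rewrite qfB c1 mulr1 subrr.
have cB := psd_null Bsym Bpsd Bc.
exists l; split; last exact: bound.
split.
  apply/eigenvalueP; exists c.
    by move/eqP: cB; rewrite mulmxBr mul_mx_scalar subr_eq0 => /eqP <-.
  apply/eqP => c0; move: c1; rewrite c0 mul0mx mxE => /eqP.
  by rewrite eq_sym oner_eq0.
move=> mu /eigenvalueP [v vM vn0].
have vp : 0 < (v *m v^T) 0 0.
  rewrite lt_def sq_ge0 andbT; apply/eqP => /sq_eq0; exact/eqP.
have : qf M v v = mu * (v *m v^T) 0 0 by rewrite /qf vM -scalemxAl mxE.
move=> E; have := bound v; rewrite E.
by rewrite ler_pM2r.
Qed.

Lemma sum_T n (T : {set 'I_n}) (F : 'I_n -> R) :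
  (forall i, i \notin T -> F i = 0) -> \sum_i F i = \sum_(k < #|T|) F (enum_val k).
Proof.
move=> F0; rewrite (bigID (mem T)) /= [X in _ + X]big1 ?addr0; last by move=> i /F0.
exact: big_enum_val.
Qed.
End RaySec.
End Ray.
Import Ray.

Theorem proposition2 (R : realType) (n : nat) (A : 'M[R]_n) (S : {set 'I_n}) :
  A^T = A ->
  (forall i j, 0 <= A i j) ->
  (forall i, A i i = 0) ->
  S != set0 ->
  forall x : 'cV[R]_n, in_simplex_on (~: S) x ->
  exists l : R, is_lambda_max (principal_submx A (~: S)) l /\
    min_over S (gamma_term A x) <= l.
Proof.
move=> sA Ag0 Ad0 Sn0 x [xs1 xge0 xsupp].
set T := ~: S.
have xz : forall i, i \notin T -> x i 0 = 0.
  move=> i iT; apply/eqP; rewrite eq_le xge0 andbT leNgt; apply/negP => /xsupp.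
  by apply/negP.
have Tpos : (0 < #|T|)%N.
  rewrite lt0n; apply/negP => /eqP/cards0_eq T0.
  move: xs1; rewrite big1 => [/eqP|i _]; first by rewrite eq_sym oner_eq0.
  by apply: xz; rewrite T0 inE.
have xz' : forall i (j : 'I_1), i \notin T -> x i j = 0.
  by move=> i j; rewrite (ord1 j); exact: xz.
set M := principal_submx A T.
have sM : M^T = M.
  apply/matrixP => i j; rewrite !mxE.
  by rewrite -[in RHS]sA mxE.
have [l [lmax bound]] := rayleigh Tpos sM.
exists l; split => //.
set y : 'rV[R]_#|T| := \row_k x (enum_val k) 0.
have E1 : (x^T *m A *m x) 0 0 = qf M y y.
  rewrite /qf mxE (sum_T (T:=T)); last by move=> i iT; rewrite xz' ?mulr0.
  rewrite mxE; apply: eq_bigr => k _; rewrite !mxE; congr (_ * _).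
  rewrite (sum_T (T:=T)); last by move=> i iT; rewrite mxE xz' ?mul0r.
  by apply: eq_bigr => k' _; rewrite !mxE.
have E2 : (x^T *m x) 0 0 = (y *m y^T) 0 0.
  rewrite mxE (sum_T (T:=T)); last by move=> i iT; rewrite mxE xz' ?mulr0.
  by rewrite mxE; apply: eq_bigr => k _; rewrite !mxE.
have xxp : 0 < (x^T *m x) 0 0.
  rewrite E2 lt_def sq_ge0 andbT; apply/eqP => /sq_eq0 y0.
  move: xs1; rewrite (sum_T (T:=T)) //.
  rewrite big1 => [/eqP|k _]; first by rewrite eq_sym oner_eq0.
  by have := congr1 (fun v : 'rV[R]_#|T| => v 0 k) y0; rewrite /= !mxE.
have key : forall i, gamma_term A x i <= l.
  move=> i; rewrite /gamma_term ler_pdivrMr // E1 E2.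
  apply: le_trans (bound y); rewrite -E1 gerBl mxE sumr_ge0 // => j _.
  by rewrite mulr_ge0.
rewrite /min_over; case: pickP => [i0 i0S|none]; last first.
  by move/set0Pn: Sn0 => [i iS]; move: (none i); rewrite iS.
apply: (@big_rec _ (fun z => z <= l)); first exact: key.
by move=> i z _ zl; rewrite ge_min zl orbT.
Qed.
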